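(* For non-negative integers $n,p$ define \begin{multline*} h(n,p)=\frac{4p^2+2p}{n+2p+1}+4p-2+(4p^2+4np+2n+6p+2)2^{1-n}+2^{1-2p}-(4p^2+2np+2n+6p+2)2^{1-n-2p}\\ +2^{1-n-2p}\sum_{i=1}^{p} i\Big\{2\binom{n+2p+3}{n+2i+1}-\binom{n+2p+3}{n+2i+2}-(2n+4p+4)\binom{2p+3}{2i+1}\Big\}\\ +2^{2-n}\sum_{i=1}^{p}\sum_{k=2i-1}^{2p} i\,2^{-k}\Big\{\frac{n+2p}{n+2p+1}\binom{n+k+2}{n+2i+1}-\binom{n+k+2}{n+2i}+\binom{k+3}{2i+1}\Big\}\\ +2^{1-2p}\sum_{i=1}^{p}\sum_{k=1}^{n} i\,2^{-k}\Big\{\binom{k+2p+3}{k+2i+2}-\frac{2n+4p+4}{n+2p+1}\binom{k+2p+2}{k+2i+1}\Big\}. \end{multline*} Then $h(n,p)=0$ for all integers $n,p\ge0$.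
   Context: $\binom{a}{b}=\frac{a!}{b!(a-b)!}$ for integers $0\le b\le a$. A sum with no terms equals $0$. *)

(* Defs.v *)
From HB Require Import structures.
From mathcomp Require Import all_boot all_order all_algebra.
Set Implicit Arguments. Unset Strict Implicit. Unset Printing Implicit Defensive.
Import Order.TTheory GRing.Theory Num.Theory.
Local Open Scope ring_scope.

Definition pow2 (z : int) : rat := (2%:R : rat) ^ z.

Definition binq (a b : nat) : rat := ('C(a, b))%:R.

Definition h (n p : nat) : rat :=
  let N : rat := n%:R in
  let P : rat := p%:R in
  (4 * P ^+ 2 + 2 * P) / (N + 2 * P + 1) + 4 * P - 2
  + (4 * P ^+ 2 + 4 * N * P + 2 * N + 6 * P + 2) * pow2 (1 - n%:Z)
  + pow2 (1 - (2 * p)%:Z)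
  - (4 * P ^+ 2 + 2 * N * P + 2 * N + 6 * P + 2) * pow2 (1 - n%:Z - (2 * p)%:Z)
  + pow2 (1 - n%:Z - (2 * p)%:Z) *
      \sum_(1 <= i < p.+1)
        i%:R * (2 * binq (n + 2 * p + 3) (n + 2 * i + 1)
                - binq (n + 2 * p + 3) (n + 2 * i + 2)
                - (2 * N + 4 * P + 4) * binq (2 * p + 3) (2 * i + 1))
  + pow2 (2 - n%:Z) *
      \sum_(1 <= i < p.+1) \sum_(2 * i - 1 <= k < (2 * p).+1)
        i%:R * pow2 (- k%:Z) *
          ((N + 2 * P) / (N + 2 * P + 1) * binq (n + k + 2) (n + 2 * i + 1)
           - binq (n + k + 2) (n + 2 * i)
           + binq (k + 3) (2 * i + 1))
  + pow2 (1 - (2 * p)%:Z) *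
      \sum_(1 <= i < p.+1) \sum_(1 <= k < n.+1)
        i%:R * pow2 (- k%:Z) *
          (binq (k + 2 * p + 3) (k + 2 * i + 2)
           - (2 * N + 4 * P + 4) / (N + 2 * P + 1) * binq (k + 2 * p + 2) (k + 2 * i + 1)).

(* Main.v *)
Require Import Defs.
From mathcomp Require Import all_boot all_order all_algebra.
From mathcomp Require Import ring zify.
Set Implicit Arguments. Unset Strict Implicit. Unset Printing Implicit Defensive.
Import Order.TTheory GRing.Theory Num.Theory.
Local Open Scope ring_scope.

Lemma binqS a b : binq a.+1 b.+1 = binq a b.+1 + binq a b.
Proof. by rewrite /binq binS natrD. Qed.

Lemma binq_small a b : (a < b)%N -> binq a b = 0.
Proof. by move=> h; rewrite /binq bin_small. Qed.

Definition T (R m : nat) : rat := \sum_(0 <= d < R.+1) binq R (m + d).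

Lemma T_split R m : T R m = binq R m + T R m.+1.
Proof.
rewrite /T big_nat_recl // addn0 [in RHS](big_nat_recr R) //=.
rewrite [binq R (m.+1 + R)]binq_small ?addr0; last by lia.
congr (_ + _); apply: eq_bigr => d _; by rewrite addnS addSn.
Qed.

Lemma T_pascal R m : T R.+1 m.+1 = T R m.+1 + T R m.
Proof.
rewrite /T.
transitivity (\sum_(0 <= d < R.+2) (binq R (m.+1 + d) + binq R (m + d))).
  by apply: eq_bigr => d _; rewrite addSn binqS -addSn.
rewrite big_split /= !(big_nat_recr R.+1) //=.
by rewrite (@binq_small R (m.+1 + R.+1)) ?(@binq_small R (m + R.+1)) ?addr0 //; lia.
Qed.

Lemma T_gt R m : (R < m)%N -> T R m = 0.
Proof.
move=> h; rewrite /T big1 // => d _; apply: binq_small.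
exact: (leq_trans h (leq_addr _ _)).
Qed.

Lemma pow2N k : pow2 (- k%:Z) = ((2:rat) ^+ k)^-1.
Proof. by rewrite /pow2 -exprnN. Qed.

Lemma two_expr_neq0 k : ((2:rat) ^+ k) != 0.
Proof. by rewrite expf_neq0. Qed.

Lemma Fsum a b m : \sum_(0 <= k < m.+1) pow2 (- k%:Z) * binq (k + a) b
  = pow2 (- m%:Z) * T (m + a).+1 b.+1 - 2 * T a b.+1.
Proof.
elim: m => [|m IH].
  rewrite big_nat1 pow2N expr0 invr1 !mul1r add0n T_pascal (T_split a b).
  ring.
rewrite big_nat_recr //= IH !pow2N addSn (T_pascal (m+a).+1 b) (T_split (m+a).+1 b).
have h := two_expr_neq0 m.
rewrite exprS; by field.
Qed.

Lemma Gsum a c m : \sum_(0 <= k < m.+1) pow2 (- k%:Z) * binq (k + a) (k + c)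
  = 2 * T a c - pow2 (- m%:Z) * T (m + a).+1 (m + c).+1.
Proof.
elim: m => [|m IH].
  rewrite big_nat1 pow2N expr0 invr1 !mul1r !add0n T_pascal (T_split a c).
  ring.
rewrite big_nat_recr //= IH !pow2N !addSn (T_pascal (m+a).+1 (m+c).+1) (T_split (m+a).+1 (m+c).+1).
have h := two_expr_neq0 m.
rewrite exprS; by field.
Qed.

Lemma T_diag R : T R R = 1.
Proof. by rewrite T_split T_gt // addr0 /binq binn. Qed.

Lemma Fsum' a b m R B : R = (m + a).+1 -> B = b.+1 ->
  \sum_(0 <= k < m.+1) pow2 (- k%:Z) * binq (k + a) b
  = pow2 (- m%:Z) * T R B - 2 * T a B.
Proof. by move=> -> ->; apply: Fsum. Qed.

Lemma range_split (f : nat -> rat) i p : (1 <= i)%N -> (i <= p)%N ->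
  \sum_(2 * i - 1 <= k < (2 * p).+1) f k =
  \sum_(0 <= k < (2 * p).+1) f k - \sum_(0 <= k < (2 * i - 2).+1) f k.
Proof.
move=> h1 h2.
rewrite (@big_cat_nat _ _ _ (2 * i - 1) 0 (2 * p).+1) //=; last by lia.
have -> : (2 * i - 1 = (2 * i - 2).+1)%N by lia.
by rewrite addrC addrK.
Qed.

Lemma K2 n p i (al : rat) : (1 <= i <= p)%N ->
 \sum_(2 * i - 1 <= k < (2 * p).+1) i%:R * pow2 (- k%:Z) *
   (al * binq (n + k + 2) (n + 2 * i + 1) - binq (n + k + 2) (n + 2 * i)
    + binq (k + 3) (2 * i + 1))
 = i%:R * (pow2 (- (2 * p)%:Z) * (al * T (n + 2 * p + 3) (n + 2 * i + 2)
     - T (n + 2 * p + 3) (n + 2 * i + 1) + T (2 * p + 4) (2 * i + 2))).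
Proof.
case/andP=> h1 h2.
transitivity (i%:R * (al * \sum_(2 * i - 1 <= k < (2 * p).+1) pow2 (- k%:Z) * binq (k + (n + 2)) (n + 2 * i + 1)
  - \sum_(2 * i - 1 <= k < (2 * p).+1) pow2 (- k%:Z) * binq (k + (n + 2)) (n + 2 * i)
  + \sum_(2 * i - 1 <= k < (2 * p).+1) pow2 (- k%:Z) * binq (k + 3) (2 * i + 1))).
  rewrite (big_distrr al) -sumrB -big_split /= big_distrr /=; apply: eq_bigr => k _.
  have -> : (n + k + 2 = k + (n + 2))%N by lia.
  ring.
rewrite !(range_split _ h1 h2).
rewrite (@Fsum' _ _ _ (n + 2 * p + 3) (n + 2 * i + 2)); try lia.
rewrite (@Fsum' _ _ _ (n + 2 * i + 1) (n + 2 * i + 2)); try lia.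
rewrite (@Fsum' _ _ _ (n + 2 * p + 3) (n + 2 * i + 1)); try lia.
rewrite (@Fsum' _ _ _ (n + 2 * i + 1) (n + 2 * i + 1)); try lia.
rewrite (@Fsum' _ _ _ (2 * p + 4) (2 * i + 2)); try lia.
rewrite (@Fsum' _ _ _ (2 * i + 2) (2 * i + 2)); try lia.
rewrite !T_diag (@T_gt (n + 2 * i + 1) (n + 2 * i + 2)); last by lia.
rewrite (@T_gt (n + 2) (n + 2 * i + 2)); last by lia.
rewrite (@T_gt (n + 2) (n + 2 * i + 1)); last by lia.
rewrite (@T_gt 3 (2 * i + 2)); last by lia.
ring.
Qed.

Lemma Gsum' a c m R Cc : R = (m + a).+1 -> Cc = (m + c).+1 ->
  \sum_(0 <= k < m.+1) pow2 (- k%:Z) * binq (k + a) (k + c)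
  = 2 * T a c - pow2 (- m%:Z) * T R Cc.
Proof. by move=> -> ->; apply: Gsum. Qed.

Lemma K3 n p i (be : rat) :
 \sum_(1 <= k < n.+1) i%:R * pow2 (- k%:Z) *
   (binq (k + 2 * p + 3) (k + 2 * i + 2) - be * binq (k + 2 * p + 2) (k + 2 * i + 1))
 = i%:R * ((2 * T (2 * p + 3) (2 * i + 2) - pow2 (- n%:Z) * T (n + 2 * p + 4) (n + 2 * i + 3)
            - binq (2 * p + 3) (2 * i + 2))
          - be * (2 * T (2 * p + 2) (2 * i + 1) - pow2 (- n%:Z) * T (n + 2 * p + 3) (n + 2 * i + 2)
            - binq (2 * p + 2) (2 * i + 1))).
Proof.
transitivity (i%:R * (\sum_(1 <= k < n.+1) pow2 (- k%:Z) * binq (k + (2 * p + 3)) (k + (2 * i + 2))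
  - be * \sum_(1 <= k < n.+1) pow2 (- k%:Z) * binq (k + (2 * p + 2)) (k + (2 * i + 1)))).
  rewrite (big_distrr be) -sumrB /= big_distrr /=; apply: eq_bigr => k _.
  rewrite !addnA; ring.
have hs : forall f : nat -> rat, \sum_(1 <= k < n.+1) f k = \sum_(0 <= k < n.+1) f k - f 0%N.
  by move=> f; rewrite (@big_ltn _ _ _ 0 n.+1) //=; ring.
rewrite !hs.
rewrite (@Gsum' _ _ _ (n + 2 * p + 4) (n + 2 * i + 3)); try lia.
rewrite (@Gsum' _ _ _ (n + 2 * p + 3) (n + 2 * i + 2)); try lia.
rewrite !pow2N expr0 invr1 !mul1r !add0n.
ring.
Qed.
From mathcomp Require Import lra.
Lemma pow2_1ab a b : pow2 (1 - a%:Z - b%:Z) = 2 * ((2 ^+ a)^-1 * (2 ^+ b)^-1).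
Proof. by rewrite /pow2 !expfzDr // expr1z -!exprnN mulrA. Qed.
Lemma pow2_2a a : pow2 (2 - a%:Z) = 4 * (2 ^+ a)^-1.
Proof.
rewrite /pow2 -[2 - _]/(1 + 1 - a%:Z) !expfzDr // expr1z -exprnN.
congr (_ * _); lra.
Qed.
Lemma pow2_1a a : pow2 (1 - a%:Z) = 2 * (2 ^+ a)^-1.
Proof. by rewrite /pow2 !expfzDr // expr1z -exprnN. Qed.

Lemma Mneq0 n p : (n%:R + 2 * p%:R + 1 : rat) != 0.
Proof. apply: lt0r_neq0; have := ler0n rat n; have := ler0n rat p; lra. Qed.

Lemma per_i n p i :
 pow2 (1 - n%:Z - (2 * p)%:Z) * (i%:R * (2 * binq (n + 2 * p + 3) (n + 2 * i + 1) - binq (n + 2 * p + 3) (n + 2 * i + 2) - (2 * n%:R + 4 * p%:R + 4) * binq (2 * p + 3) (2 * i + 1)))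
 + pow2 (2 - n%:Z) * (i%:R * (pow2 (- (2 * p)%:Z) * ((n%:R + 2 * p%:R) / (n%:R + 2 * p%:R + 1) * T (n + 2 * p + 3) (n + 2 * i + 2) - T (n + 2 * p + 3) (n + 2 * i + 1) + T (2 * p + 4) (2 * i + 2))))
 + pow2 (1 - (2 * p)%:Z) * (i%:R * ((2 * T (2 * p + 3) (2 * i + 2) - pow2 (- n%:Z) * T (n + 2 * p + 4) (n + 2 * i + 3) - binq (2 * p + 3) (2 * i + 2)) - (2 * n%:R + 4 * p%:R + 4) / (n%:R + 2 * p%:R + 1) * (2 * T (2 * p + 2) (2 * i + 1) - pow2 (- n%:Z) * T (n + 2 * p + 3) (n + 2 * i + 2) - binq (2 * p + 2) (2 * i + 1))))
 = i%:R * (pow2 (1 - n%:Z - (2 * p)%:Z) * (-2 * (n%:R + 2 * p%:R + 1) * binq (2 * p + 3) (2 * i + 1) + 4 * T (2 * p + 3) (2 * i + 2))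
   + pow2 (1 - (2 * p)%:Z) * (- binq (2 * p + 3) (2 * i + 2) - 2 * T (2 * p + 3) (2 * i + 2) / (n%:R + 2 * p%:R + 1))).
Proof.
have Ts : forall R m m', m' = m.+1 -> T R m = binq R m + T R m'.
  by move=> R m m' ->; apply: T_split.
have Tp : forall R R' m m', R' = R.+1 -> m' = m.+1 -> T R' m' = T R m' + T R m.
  by move=> R R' m m' -> ->; apply: T_pascal.
have f1 : binq (n + 2 * p + 3) (n + 2 * i + 1) = T (n + 2 * p + 3) (n + 2 * i + 1) - T (n + 2 * p + 3) (n + 2 * i + 2).
  rewrite (Ts _ _ (n + 2 * i + 2)); [ring | lia].
have f2 : binq (n + 2 * p + 3) (n + 2 * i + 2) = T (n + 2 * p + 3) (n + 2 * i + 2) - T (n + 2 * p + 3) (n + 2 * i + 3).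
  rewrite (Ts _ _ (n + 2 * i + 3)); [ring | lia].
have f3 : T (n + 2 * p + 4) (n + 2 * i + 3) = T (n + 2 * p + 3) (n + 2 * i + 3) + T (n + 2 * p + 3) (n + 2 * i + 2).
  apply: Tp; lia.
have f4 : T (2 * p + 4) (2 * i + 2) = T (2 * p + 3) (2 * i + 2) + T (2 * p + 3) (2 * i + 1).
  apply: Tp; lia.
have f5 : T (2 * p + 3) (2 * i + 1) = binq (2 * p + 3) (2 * i + 1) + T (2 * p + 3) (2 * i + 2).
  apply: Ts; lia.
have f6 : T (2 * p + 3) (2 * i + 2) = T (2 * p + 2) (2 * i + 2) + T (2 * p + 2) (2 * i + 1).
  apply: Tp; lia.
have f7 : T (2 * p + 2) (2 * i + 1) = binq (2 * p + 2) (2 * i + 1) + T (2 * p + 2) (2 * i + 2).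
  apply: Ts; lia.
rewrite f1 f2 f3 f4 f5 f6 f7.
rewrite pow2_1ab pow2_2a pow2_1a !pow2N.
have h1 := two_expr_neq0 n; have h2 := two_expr_neq0 (2 * p); have hM := Mneq0 n p.
by field; rewrite hM h1 h2.
Qed.

Lemma natS (d : nat) : (d.+1)%:R = d%:R + 1 :> rat.
Proof. by rewrite -addn1 natrD. Qed.

Lemma shiftB (f : nat -> rat) Q :
  \sum_(0 <= d < Q.+2) f d * binq Q.+1 d
  = \sum_(0 <= d < Q.+1) f d * binq Q d + \sum_(0 <= d < Q.+1) f d.+1 * binq Q d.
Proof.
rewrite big_nat_recl // /binq bin0.
under eq_bigr => d _ do rewrite binS natrD mulrDr.
rewrite big_split /= addrA; congr (_ + _).
rewrite [in RHS]big_nat_recl // bin0 (big_nat_recr Q) //= bin_small // mulr0 addr0.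
by [].
Qed.

Definition Mo k Q : rat := \sum_(0 <= d < Q.+1) d%:R ^+ k * binq Q d.
Definition Al k Q : rat := \sum_(0 <= d < Q.+1) (-1) ^+ d * d%:R ^+ k * binq Q d.

Lemma Mo_all Q : [/\ Mo 0 Q = 2 ^+ Q, Mo 1 Q = Q%:R * 2 ^+ Q / 2
   & Mo 2 Q = Q%:R * (Q%:R + 1) * 2 ^+ Q / 4].
Proof.
elim: Q => [|Q [IH0 IH1 IH2]].
  rewrite /Mo !big_nat1 /binq bin0 !expr0; by split; field.
have e0 : Mo 0 Q.+1 = Mo 0 Q + Mo 0 Q.
  by rewrite /Mo shiftB; congr (_ + _); apply: eq_bigr => d _; rewrite !expr0.
have e1 : Mo 1 Q.+1 = Mo 1 Q + Mo 1 Q + Mo 0 Q.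
  rewrite /Mo shiftB -addrA; congr (_ + _).
  rewrite -big_split /=; apply: eq_bigr => d _; rewrite natS; ring.
have e2 : Mo 2 Q.+1 = Mo 2 Q + Mo 2 Q + 2 * Mo 1 Q + Mo 0 Q.
  rewrite /Mo shiftB -!addrA; congr (_ + _).
  rewrite big_distrr -!big_split /=; apply: eq_bigr => d _; rewrite natS; ring.
rewrite e0 e1 e2 IH0 IH1 IH2 natS exprS; by split; field.
Qed.

Lemma Al0 Q : Al 0 Q.+1 = 0.
Proof.
rewrite /Al shiftB.
have -> : \sum_(0 <= d < Q.+1) (-1) ^+ d.+1 * d.+1%:R ^+ 0 * binq Q d
   = - \sum_(0 <= d < Q.+1) (-1) ^+ d * d%:R ^+ 0 * binq Q d.
  by rewrite -sumrN; apply: eq_bigr => d _; rewrite exprS !expr0; ring.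
by rewrite subrr.
Qed.

Lemma Al1 Q : Al 1 Q.+2 = 0.
Proof.
have h0 := Al0 Q; rewrite /Al in h0 *; rewrite shiftB.
have -> : \sum_(0 <= d < Q.+2) (-1) ^+ d.+1 * d.+1%:R ^+ 1 * binq Q.+1 d
   = - (\sum_(0 <= d < Q.+2) (-1) ^+ d * d%:R ^+ 1 * binq Q.+1 d
        + \sum_(0 <= d < Q.+2) (-1) ^+ d * d%:R ^+ 0 * binq Q.+1 d).
  by rewrite -big_split -sumrN /=; apply: eq_bigr => d _; rewrite natS exprS; ring.
by rewrite h0 addr0 subrr.
Qed.

Lemma moment Q (a0 a1 a2 b0 b1 : rat) : (2 <= Q)%N ->
 \sum_(0 <= d < Q.+1) (a0 + a1 * d%:R + a2 * d%:R ^+ 2 + (-1) ^+ d * (b0 + b1 * d%:R)) * binq Q d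
 = (a0 + a1 * Q%:R / 2 + a2 * Q%:R * (Q%:R + 1) / 4) * 2 ^+ Q.
Proof.
move=> hS.
transitivity (a0 * Mo 0 Q + a1 * Mo 1 Q + a2 * Mo 2 Q + b0 * Al 0 Q + b1 * Al 1 Q).
  rewrite /Mo /Al !big_distrr -!big_split /=; apply: eq_bigr => d _; ring.
case: Q hS => [|[|Q]] // _.
case: (Mo_all Q.+2) => -> -> ->; rewrite Al1 Al0; by field.
Qed.

Lemma pairs (F : nat -> rat) m :
  \sum_(0 <= d < 2 * m) F d = \sum_(0 <= l < m) (F (2 * l)%N + F (2 * l).+1).
Proof.
elim: m => [|m IH]; first by rewrite muln0 !big_geq.
have -> : (2 * m.+1 = (2 * m).+2)%N by lia.
by rewrite !big_nat_recr //= IH addrA.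
Qed.

Lemma via_pairs (F H : nat -> rat) m :
  (forall l, F (2 * l)%N + F (2 * l).+1 = H l) ->
  \sum_(0 <= l < m) H l = \sum_(0 <= d < 2 * m) F d.
Proof. by move=> hFH; rewrite pairs; apply: eq_bigr => l _; rewrite hFH. Qed.

Lemma shift0 (G : nat -> rat) p :
  \sum_(1 <= i < p.+1) G i = \sum_(0 <= i < p.+2) G i - G 0%N - G p.+1.
Proof. rewrite (big_nat_recr p.+1) //= (@big_ltn _ _ _ 0 p.+1) //=; ring. Qed.

Lemma shift2 (G H : nat -> rat) p : (forall l, H l.+2 = G l.+1) ->
  \sum_(1 <= i < p.+1) G i = \sum_(0 <= l < p.+2) H l - H 0%N - H 1%N.
Proof.
move=> hGH; rewrite big_add1 /= [in RHS]big_nat_recl // [in RHS]big_nat_recl //.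
under [in RHS]eq_bigr => l _ do rewrite hGH.
ring.
Qed.

Lemma sgn_even l : (-1) ^+ (2 * l)%N = 1 :> rat.
Proof. by rewrite exprM sqrrN expr1n. Qed.
Lemma sgn_odd l : (-1) ^+ (2 * l).+1 = -1 :> rat.
Proof. by rewrite exprS sgn_even mulr1. Qed.
Lemma nat2 l : ((2 * l)%N%:R : rat) = 2 * l%:R.
Proof. by rewrite natrM. Qed.

Lemma sumB p : \sum_(1 <= i < p.+1) i%:R * binq (2 * p + 3) (2 * i + 1)
  = (2 * p%:R + 1) * 2 ^+ (2 * p) - p%:R - 1.
Proof.
rewrite shift0.
rewrite (@via_pairs (fun d => (-1/4 + 1/4 * d%:R + 0 * d%:R ^+ 2 + (-1) ^+ d * (1/4 + (-1/4) * d%:R)) * binq (2 * p + 3) d)); last first.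
  move=> l; rewrite sgn_even sgn_odd natS nat2.
  have -> : (2 * l + 1 = (2 * l).+1)%N by lia.
  by field.
have -> : (2 * p.+2 = (2 * p + 3).+1)%N by lia.
rewrite (@moment (2 * p + 3) (-1/4) (1/4) 0 (1/4) (-1/4)); last by lia.
have -> : (2 * p.+1 + 1 = 2 * p + 3)%N by lia.
rewrite /binq binn !natrD exprD natS.
by field.
Qed.

Lemma sumBb p : \sum_(1 <= i < p.+1) i%:R * binq (2 * p + 3) (2 * i + 2)
  = (2 * p%:R - 1) * 2 ^+ (2 * p) + 1.
Proof.
rewrite (@shift2 _ (fun l => (l%:R - 1) * binq (2 * p + 3) (2 * l)) p); last first.
  move=> l /=; rewrite natS.
  have -> : (2 * l.+2 = 2 * l.+1 + 2)%N by lia.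
  ring.
rewrite (@via_pairs (fun d => (-1/2 + 1/4 * d%:R + 0 * d%:R ^+ 2 + (-1) ^+ d * (-1/2 + 1/4 * d%:R)) * binq (2 * p + 3) d)); last first.
  move=> l; rewrite sgn_even sgn_odd natS nat2.
  by field.
have -> : (2 * p.+2 = (2 * p + 3).+1)%N by lia.
rewrite (@moment (2 * p + 3) (-1/2) (1/4) 0 (-1/2) (1/4)); last by lia.
rewrite /binq muln0 bin0 !natrD exprD.
by field.
Qed.

Lemma abel (s : nat -> rat) m :
  \sum_(1 <= i < m.+1) i%:R * s i
  = \sum_(1 <= i < m.+1) (i%:R * (i%:R + 1) / 2) * (s i - s i.+1)
    + m%:R * (m%:R + 1) / 2 * s m.+1.
Proof.
elim: m => [|m IH]; first by rewrite !big_geq //; ring.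
rewrite (big_nat_recr m.+1) //= IH (big_nat_recr m.+1) //= natS.
by field.
Qed.

Lemma sumSs p : \sum_(1 <= i < p.+1) i%:R * T (2 * p + 3) (2 * i + 2)
  = p%:R * (2 * p%:R + 1) * 2 ^+ (2 * p) / 2.
Proof.
rewrite (abel (fun i => T (2 * p + 3) (2 * i + 2))) /=.
rewrite (@T_gt (2 * p + 3) (2 * p.+1 + 2)); last by lia.
rewrite mulr0 addr0.
have hd : forall i, T (2 * p + 3) (2 * i + 2) - T (2 * p + 3) (2 * i.+1 + 2)
   = binq (2 * p + 3) (2 * i + 2) + binq (2 * p + 3) (2 * i + 3).
  move=> i; rewrite (T_split _ (2 * i + 2)) (T_split _ (2 * i + 2).+1).
  have -> : ((2 * i + 2).+2 = 2 * i.+1 + 2)%N by lia.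
  have -> : ((2 * i + 2).+1 = 2 * i + 3)%N by lia.
  ring.
under eq_bigr => i _ do rewrite hd.
rewrite (@shift2 _ (fun l => (l%:R * (l%:R - 1) / 2) * (binq (2 * p + 3) (2 * l) + binq (2 * p + 3) (2 * l).+1)) p); last first.
  move=> l /=; rewrite !natS.
  have -> : (2 * l.+2 = 2 * l.+1 + 2)%N by lia.
  have -> : ((2 * l.+1 + 2).+1 = 2 * l.+1 + 3)%N by lia.
  by field.
rewrite (@via_pairs (fun d => (3/16 + (-6/16) * d%:R + 2/16 * d%:R ^+ 2 + (-1) ^+ d * (-3/16 + 2/16 * d%:R)) * binq (2 * p + 3) d)); last first.
  move=> l; rewrite sgn_even sgn_odd natS nat2.
  by field.
have -> : (2 * p.+2 = (2 * p + 3).+1)%N by lia.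
rewrite (@moment (2 * p + 3) (3/16) (-6/16) (2/16) (-3/16) (2/16)); last by lia.
rewrite /binq muln0 bin0 !natrD exprD.
by field.
Qed.

Theorem lemma14 (n p : nat) : h n p = 0%R.
Proof.
rewrite /h /=.
rewrite (eq_big_nat _ _ (fun i (hi : (1 <= i < p.+1)%N) => @K2 n p i _ hi)).
rewrite (eq_bigr _ (fun i _ => @K3 n p i _)).
rewrite !big_distrr /=.
have comb : forall X A B C : rat, X + A + B + C = X + (A + B + C) by move=> *; ring.
rewrite comb -!big_split /=.
rewrite (eq_bigr _ (fun i _ => per_i n p i)).
set c1 := pow2 (1 - n%:Z - (2 * p)%:Z).
set e := pow2 (1 - (2 * p)%:Z).
set M := (n%:R + 2 * p%:R + 1 : rat).
have -> : \sum_(1 <= i < p.+1) i%:R * (c1 * (-2 * M * binq (2 * p + 3) (2 * i + 1) + 4 * T (2 * p + 3) (2 * i + 2))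
     + e * (- binq (2 * p + 3) (2 * i + 2) - 2 * T (2 * p + 3) (2 * i + 2) / M))
  = (- 2 * c1 * M) * \sum_(1 <= i < p.+1) i%:R * binq (2 * p + 3) (2 * i + 1)
    + (4 * c1 - 2 * e / M) * \sum_(1 <= i < p.+1) i%:R * T (2 * p + 3) (2 * i + 2)
    + (- e) * \sum_(1 <= i < p.+1) i%:R * binq (2 * p + 3) (2 * i + 2).
  rewrite !big_distrr -!big_split /=; apply: eq_bigr => i _; ring.
rewrite sumB sumBb sumSs /c1 /e /M.
rewrite pow2_1ab !pow2_1a.
have h1 := two_expr_neq0 n; have h2 := two_expr_neq0 (2 * p); have hM := Mneq0 n p.
by field; rewrite hM h1 h2.
Qed.
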